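(* Let $A(x)$ be an Alltop function on a finite field $\mathbb{F}_q$ of characteristic $p$. For $a,b\in\mathbb{F}_q$ let $\vec{v}_{ab}=\frac{1}{\sqrt{q}}\big(\omega_p^{\mathrm{tr}(A(x+a)+b(x+a))}\big)_{x\in\mathbb{F}_q}$, and let $C_A=\{\vec{v}_{ab}:a,b\in\mathbb{F}_q\}\cup E$, where $E$ is the standard basis of $\mathbb{C}^q$. Then $C_A$ is a $(q^2+q,q)$ signal set with $I_{\max}(C_A)=\frac{1}{\sqrt{q}}$.
   Context: $\omega_p=e^{2\pi i/p}$ and $\mathrm{tr}$ is the absolute trace from $\mathbb{F}_q$ to $\mathbb{F}_p$. For $f:\mathbb{F}_q\to\mathbb{F}_q$, $\Delta_{f,a}(x)=f(x+a)-f(x)$; $f$ is planar if $x\mapsto\Delta_{f,a}(x)$ is a bijection for all $a\neq0$; $A$ is an Alltop function if $\Delta_{A,a}$ is planar for all $a\neq0$. An $(N,K)$ signal set is a set of $N$ unit vectors $\{\vec{v}_i\}$ in $\mathbb{C}^K$, and $I_{\max}=\max_{i<j}|\langle\vec{v}_i|\vec{v}_j\rangle|$. *)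

(* Defs.v *)
From mathcomp Require Import all_boot all_algebra all_field.
From mathcomp Require Import all_classical all_reals all_analysis.
From mathcomp.real_closed Require Export complex.
Set Implicit Arguments. Unset Strict Implicit. Unset Printing Implicit Defensive.
Import GRing.Theory Num.Theory.
Local Open Scope ring_scope.
Local Open Scope complex_scope.

Section Defs.
Variable F : finFieldType.

Definition Delta (f : F -> F) (a : F) : F -> F := fun x => f (x + a) - f x.

Definition planar (f : F -> F) : Prop :=
  forall a : F, a != 0 -> bijective (Delta f a).

Definition alltop (A : F -> F) : Prop :=
  forall a : F, a != 0 -> planar (Delta A a).

(* absolute trace F_q -> F_p, q = p^n : tr x = sum_{i<n} x^(p^i) (value in
   the prime subfield, as an element of F) *)
Definition abs_trace (p : nat) (x : F) : F :=
  \sum_(i < logn p #|F|) x ^+ (p ^ i).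

(* the element of Z/p = {0,...,p-1} representing tr x, i.e. k with k%:R = tr x *)
Definition trace_exp (p : nat) (x : F) : nat :=
  oapp (@nat_of_ord p) 0%N [pick k : 'I_p | ((k : nat)%:R : F) == abs_trace p x].

Variable R : realType.

Definition omega (p : nat) : R[i] :=
  cos (2 * pi / p%:R) +i* sin (2 * pi / p%:R).

Definition psi (p : nat) (y : F) : R[i] := omega p ^+ trace_exp p y.

(* vectors of C^q, with coordinates indexed by F *)
Definition inner (u v : F -> R[i]) : R[i] := \sum_(x : F) u x * (v x)^*.

Definition vab (p : nat) (A : F -> F) (a b : F) : F -> R[i] :=
  fun x => (sqrtC (#|F|%:R : R[i]))^-1 * psi p (A (x + a) + b * (x + a)).

Definition std_basis (y : F) : F -> R[i] := fun x => if x == y then 1 else 0.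

Definition CA (p : nat) (A : F -> F) : (F * F)%type + F -> (F -> R[i]) :=
  fun i => match i with
           | inl ab => vab p A ab.1 ab.2
           | inr y => std_basis y
           end.

(* an (N,K) signal set given as an indexed family of vectors in C^K
   (coordinates indexed by F, K = #|F|): the family consists of N distinct
   vectors (injective indexing by a type with N elements), all unit vectors *)
Definition signal_set (I : finType) (N K : nat) (v : I -> F -> R[i]) : Prop :=
  [/\ #|I| = N, #|F| = K, injective v & forall i, inner (v i) (v i) = 1].

Definition is_Imax (I : finType) (v : I -> F -> R[i]) (m : R[i]) : Prop :=
  (forall i j, i != j -> `|inner (v i) (v j)| <= m) /\
  (exists i j, i != j /\ `|inner (v i) (v j)| = m).

End Defs.

(* Main.v *)
Require Import Defs.
From mathcomp Require Import all_boot all_algebra all_field.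
From mathcomp Require Import all_classical all_reals all_analysis.
From mathcomp.real_closed Require Import complex.
From mathcomp Require Import ring lra.
From mathcomp Require Import all_order.
Set Implicit Arguments. Unset Strict Implicit.
Import Order.TTheory GRing.Theory Num.Theory.
Local Open Scope ring_scope.

Section Om.
Variable R : realType.

Local Open Scope complex_scope.
Lemma cis_mul (x y : R) : (cos x +i* sin x) * (cos y +i* sin y) = cos (x + y) +i* sin (x + y) :> R[i].
Proof.
rewrite cosD sinD. 
have -> : forall a b c d : R, (a +i* b) * (c +i* d) = (a * c - b * d) +i* (a * d + b * c) :> R[i] by [].
congr (_ +i* _); ring.
Qed.

Lemma cis_exp (x : R) n : (cos x +i* sin x) ^+ n = cos (n%:R * x) +i* sin (n%:R * x) :> R[i].
Proof.
elim: n => [|n IH]; first by rewrite expr0 mul0r cos0 sin0.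
rewrite exprS IH cis_mul; congr (cos _ +i* sin _); rewrite -natr1; ring.
Qed.

Lemma omega_p (p : nat) : (0 < p)%N -> omega R p ^+ p = 1.
Proof.
move=> p0; rewrite /omega cis_exp mulrCA mulfV ?pnatr_eq0 -?lt0n // mulr1.
have -> : 2 * pi = pi *+ 2 :> R by rewrite mulrC mulr_natr.
by rewrite cos2pi sin2pi complexr0.
Qed.

Lemma omega_neq1 (p : nat) : (1 < p)%N -> omega R p != 1.
Proof.
move=> p1; apply/eqP => /(congr1 (@complex.Re R)) /=.
have pp : (0 : R) < p%:R by rewrite ltr0n; case: p p1.
have h0 : (0 : R) < 2 * pi / p%:R by rewrite divr_gt0 // mulr_gt0 // pi_gt0.
have h1 : 2 * pi / p%:R <= pi :> R.
  rewrite ler_pdivrMr // mulrC ler_pM2l ?pi_gt0 //.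
  by rewrite (ler_nat R 2 p).
have := @ltr_cos R 0 (2 * pi / p%:R).
rewrite !in_itv /= lexx pi_ge0 (ltW h0) h1 cos0 => /(_ isT isT).
by rewrite h0 => + E; rewrite E ltxx.
Qed.
End Om.
Section Fld.
Variables (F : finFieldType) (p : nat).
Hypotheses (hp : prime p) (hc : p \in [pchar F]).

Lemma cardF_gt1 : (1 < #|F|)%N.
Proof. by apply/card_gt1P; exists 0, 1; rewrite eq_sym oner_neq0. Qed.

Lemma cardF : #|F| = (p ^ logn p #|F|)%N.
Proof. exact: (card_pprimeChar hc). Qed.

Lemma natr_inj_p (u v : nat) : (u < p)%N -> (v < p)%N -> u%:R = v%:R :> F -> u = v.
Proof.
wlog uv : u v / (u <= v)%N.
  move=> H up vp E; case: (leqP u v) => h; first exact: H.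
  by apply/esym/H => //; apply: ltnW.
move=> up vp E; apply/eqP; rewrite eqn_leq uv /=.
have : (p %| v - u)%N by rewrite (dvdn_pcharf hc) natrB // E subrr.
case: (posnP (v - u)) => [/eqP|h /(dvdn_leq h)]; first by rewrite subn_eq0.
have : (v - u < p)%N by apply: leq_ltn_trans vp; apply: leq_subr.
by move=> h1 h2; have := leq_trans h1 h2; rewrite ltnn.
Qed.

Lemma frobX (x y : F) i : (x + y) ^+ (p ^ i) = x ^+ (p ^ i) + y ^+ (p ^ i).
Proof.
elim: i => [|i IH]; first by rewrite !expn0 !expr1.
by rewrite expnSr !exprM IH -!(pFrobenius_autE hc) rmorphD.
Qed.

Lemma trD (x y : F) : abs_trace p (x + y) = abs_trace p x + abs_trace p y.
Proof. by rewrite /abs_trace -big_split /=; apply: eq_bigr => i _; rewrite frobX. Qed.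

Lemma tr_frob (x : F) : abs_trace p x ^+ p = abs_trace p x.
Proof.
rewrite /abs_trace -(pFrobenius_autE hc) rmorph_sum /=.
under eq_bigr do rewrite (pFrobenius_autE hc) -exprM -expnSr.
set n := logn p #|F|.
have e1 : \sum_(i < n.+1) x ^+ (p ^ i) = \sum_(i < n) x ^+ (p ^ i) + x ^+ (p ^ n).
  by rewrite big_ord_recr.
have e2 : \sum_(i < n.+1) x ^+ (p ^ i) = x ^+ (p ^ 0) + \sum_(i < n) x ^+ (p ^ i.+1).
  by rewrite big_ord_recl.
have e3 : x ^+ (p ^ n) = x ^+ (p ^ 0) by rewrite expn0 expr1 /n -cardF expf_card.
rewrite e3 e2 addrC in e1.
exact: (addIr _ e1).
Qed.

Lemma prime_sub (x : F) : x ^+ p = x -> exists k : 'I_p, (k : nat)%:R = x.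
Proof.
move=> hx; case: (boolP [exists k : 'I_p, ((k : nat)%:R : F) == x]) => [/existsP [k /eqP]|/existsPn H]; first by exists k.
exfalso.
set P : {poly F} := 'X^p - 'X.
have p1 : (1 < p)%N by apply: prime_gt1.
have sP : size P = p.+1.
  rewrite /P size_addl ?size_polyXn // size_opp size_polyX ltnS //.
have P0 : P != 0 by rewrite -size_poly_eq0 sP.
have := @max_poly_roots _ P (x :: [seq (val k)%:R | k : 'I_p]) P0.
rewrite sP /= size_map size_enum_ord ltnn.
have rt : forall z : F, z ^+ p = z -> root P z.
  by move=> z hz; rewrite /root /P !hornerE hz subrr.
rewrite rt //= map_inj_uniq ?enum_uniq; last first.
  by move=> a b /natr_inj_p ab; apply/val_inj/ab.
rewrite andbT.
have -> : x \notin [seq (val k)%:R | k : 'I_p].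
  apply/mapP => -[k _ e]; have := H k; by rewrite e eqxx.
move=> h; suff: false by []; apply: h => //; apply/allP => z /mapP [k _ ->]; apply: rt.
by rewrite -(pFrobenius_autE hc) rmorph_nat.
Qed.

Lemma te_spec (x : F) : (trace_exp p x < p)%N /\ (trace_exp p x)%:R = abs_trace p x.
Proof.
rewrite /trace_exp; case: pickP => [k /eqP -> | H] /=; first by [].
have [k hk] := @prime_sub _ (tr_frob x).
by have := H k; rewrite hk eqxx.
Qed.

Lemma teD (x y : F) : trace_exp p (x + y) = ((trace_exp p x + trace_exp p y) %% p)%N.
Proof.
have [h1 e1] := te_spec (x + y); have [h2 e2] := te_spec x; have [h3 e3] := te_spec y.
apply: natr_inj_p => //; first by rewrite ltn_mod prime_gt0.
rewrite e1 trD -e2 -e3 -natrD {1}(divn_eq (trace_exp p x + trace_exp p y) p).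
by rewrite natrD natrM (pcharf0 hc) mulr0 add0r.
Qed.


Lemma tr_nontriv : exists t : F, abs_trace p t != 0.
Proof.
have p1 : (1 < p)%N by apply: prime_gt1.
case E: (logn p #|F|) => [|m].
  by have := cardF_gt1; rewrite cardF E.
case: (boolP [exists t : F, abs_trace p t != 0]) => [/existsP [t ht]|/existsPn H]; first by exists t.
exfalso.
set P : {poly F} := \sum_(i < m.+1) 'X^(p ^ i).
have P1 : P`_1 = 1.
  rewrite /P coef_sum big_ord_recl /= coefXn expn0 eqxx big1 ?addr0 // => i _.
  rewrite coefXn; case: eqP => // /esym h; have := ltn_exp2l 0 (bump 0 i) p1.
  by rewrite h expn0 /bump /= add1n ltn0Sn.
have P0 : P != 0 by apply/eqP => h; move: P1; rewrite h coef0 => /eqP; rewrite eq_sym oner_eq0.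
have := @max_poly_roots _ P (enum F) P0.
rewrite enum_uniq -cardE.
have -> : all (root P) (enum F).
  apply/allP => z _; rewrite /root /P horner_sum.
  have := H z; rewrite negbK => /eqP hz.
  apply/eqP; transitivity (abs_trace p z); last exact: hz.
  rewrite /abs_trace E; apply: eq_bigr => i _; by rewrite hornerXn.
move=> /(_ isT isT); apply/negP; rewrite -leqNgt.
apply: (leq_trans (size_sum _ _ _)); apply/bigmax_leqP => i _.
rewrite size_polyXn cardF E expnSr.
have : (p ^ i <= p ^ m)%N by rewrite leq_exp2l // -ltnS.
move=> h; apply: (leq_ltn_trans h); rewrite -[X in (X < _)%N]muln1 ltn_mul2l.
by rewrite p1 expn_gt0 prime_gt0.
Qed.

End Fld.

Section Psi.
Variables (R : realType) (F : finFieldType) (p : nat).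
Hypotheses (hp : prime p) (hc : p \in [pchar F]).

Local Notation w := (omega R p).
Local Notation ps := (@psi F R p).

Lemma hw : w ^+ p = 1. Proof. exact/omega_p/prime_gt0. Qed.

Lemma psiD (x y : F) : ps (x + y) = ps x * ps y.
Proof. by rewrite /psi (teD hp hc) (expr_mod _ hw) exprD. Qed.

Lemma psi_p (x : F) : ps x ^+ p = 1.
Proof. by rewrite /psi -exprM mulnC exprM hw expr1n. Qed.

Lemma psi_norm (x : F) : `|ps x| = 1.
Proof.
apply/eqP; rewrite -(@pexpr_eq1 _ _ p) ?prime_gt0 // -normrX psi_p.
by rewrite normr1.
Qed.

Lemma psi_conjM (x : F) : ps x * (ps x)^* = 1.
Proof. by rewrite -normCK psi_norm expr1n. Qed.

Lemma psi_neq0 (x : F) : ps x != 0.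
Proof. by apply/eqP => h; have := psi_conjM x; rewrite h mul0r => /eqP; rewrite eq_sym oner_eq0. Qed.

Lemma psi0 : ps 0 = 1.
Proof.
apply: (mulfI (psi_neq0 0)); rewrite mulr1 -psiD addr0 //.
Qed.

Lemma psi_conj (x : F) : (ps x)^* = ps (- x).
Proof.
apply: (mulfI (psi_neq0 x)); by rewrite psi_conjM -psiD subrr psi0.
Qed.

Lemma psi_ne1 : exists t : F, ps t != 1.
Proof.
have [t ht] := tr_nontriv hp hc; exists t.
have [k1 k2] := te_spec hp hc t.
have k0 : (0 < trace_exp p t)%N.
  by rewrite lt0n; apply: contra ht => /eqP h; rewrite -k2 h.
have [m pm mp] := prim_order_exists (prime_gt0 hp) hw.
have : m = p.
  have := (primeP hp).2 m mp; case/orP => /eqP //.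
  move=> m1; have := prim_expr_order pm; rewrite m1 expr1 => h.
  by have := omega_neq1 R (prime_gt1 hp); rewrite h eqxx.
move=> em; rewrite /psi -(prim_order_dvd pm) em.
by apply/negP => /(dvdn_leq k0); rewrite leqNgt k1.
Qed.

Lemma sum_psi : \sum_(y : F) ps y = 0.
Proof.
have [t ht] := psi_ne1.
have e : \sum_(y : F) ps y = ps t * \sum_(y : F) ps y.
  rewrite mulr_sumr (reindex_inj (addIr t)) /=.
  by apply: eq_bigr => y _; rewrite psiD mulrC.
have : (ps t - 1) * \sum_(y : F) ps y = 0 by rewrite mulrBl -e mul1r subrr.
by move/eqP; rewrite mulf_eq0 subr_eq0 (negbTE ht) /= => /eqP.
Qed.

Lemma sum_psi_inj (g : F -> F) : injective g -> \sum_(y : F) ps (g y) = 0.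
Proof. by move=> gi; by rewrite -(reindex_inj (P := xpredT) (F := fun y => ps y) gi) sum_psi. Qed.

Lemma planar_sum (g : F -> F) :
  (forall e, e != 0 -> injective (Delta g e)) ->
  (\sum_(x : F) ps (g x)) * (\sum_(x : F) ps (g x))^* = #|F|%:R.
Proof.
move=> hg.
rewrite rmorph_sum /= mulr_suml.
transitivity (\sum_(x : F) \sum_(y : F) ps (g x - g y)).
  apply: eq_bigr => x _; rewrite mulr_sumr; apply: eq_bigr => y _.
  by rewrite psi_conj -psiD.
rewrite exchange_big /=.
have -> : \sum_(y : F) \sum_(x : F) ps (g x - g y) =
          \sum_(y : F) \sum_(e : F) ps (Delta g e y).
  apply: eq_bigr => y _; rewrite (reindex_inj (addrI y)) /=.
  by apply: eq_bigr => e _; rewrite /Delta.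
rewrite exchange_big /= (bigD1 0) //= [X in _ + X]big1 ?addr0.
  rewrite /Delta; under eq_bigr do rewrite addr0 subrr psi0.
  by rewrite sumr_const.
by move=> e he; apply: sum_psi_inj; apply: hg.
Qed.

End Psi.

Section Main.
Variables (R : realType) (F : finFieldType) (p : nat) (A : F -> F).
Hypotheses (hp : prime p) (hc : p \in [pchar F]) (hA : alltop A).

Local Notation ps := (@psi F R p).
Local Notation q := (#|F|%:R : R[i]).
Local Notation s := (sqrtC q).
Local Notation c := (s^-1).


Lemma q_gt0 : 0 < q. Proof. by rewrite ltr0n; apply: ltnW; apply: cardF_gt1. Qed.
Lemma s_gt0 : 0 < s. Proof. by rewrite sqrtC_gt0 q_gt0. Qed.
Lemma c_ge0 : 0 <= c. Proof. by rewrite invr_ge0 ltW // s_gt0. Qed.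
Lemma c_conj : c^* = c. Proof. exact/geC0_conj/c_ge0. Qed.
Lemma c_norm : `|c| = c. Proof. exact/ger0_norm/c_ge0. Qed.
Lemma cs : c * s = 1. Proof. by rewrite mulVf // gt_eqF // s_gt0. Qed.
Lemma ccq : c * c * q = 1.
Proof.
have -> : c * c * q = c * c * (s * s) by congr (_ * _); rewrite -expr2 sqrtCK.
by rewrite mulrA -(mulrA c c s) cs mulr1 cs.
Qed.

Definition u (a b x : F) := A (x + a) + b * (x + a).

Lemma vabE a b x : vab R p A a b x = c * ps (u a b x). Proof. by []. Qed.

Lemma inner_vv a b a' b' :
  inner (vab R p A a b) (vab R p A a' b') =
  c * c * \sum_(x : F) ps (u a b x - u a' b' x).
Proof.
rewrite /inner mulr_sumr; apply: eq_bigr => x _.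
rewrite !vabE rmorphM /= c_conj psi_conj // mulrACA psiD //.
Qed.

Lemma inner_ve a b y : inner (vab R p A a b) (std_basis R y) = vab R p A a b y.
Proof.
rewrite /inner (bigD1 y) //= big1 ?addr0.
  by rewrite /std_basis eqxx rmorph1 mulr1.
by move=> x /negbTE hx; rewrite /std_basis hx rmorph0 mulr0.
Qed.

Lemma inner_ev a b y : inner (std_basis R y) (vab R p A a b) = (vab R p A a b y)^*.
Proof.
rewrite /inner (bigD1 y) //= big1 ?addr0.
  by rewrite /std_basis eqxx mul1r.
by move=> x /negbTE hx; rewrite /std_basis hx mul0r.
Qed.

Lemma inner_ee (y y' : F) : inner (std_basis R y) (std_basis R y') = (y == y')%:R.
Proof.
rewrite /inner (bigD1 y) //= big1 ?addr0.
  rewrite /std_basis eqxx mul1r eq_sym; case: eqP => _.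
  by rewrite rmorph1.
  by rewrite rmorph0.
by move=> x /negbTE hx; rewrite /std_basis hx mul0r.
Qed.

Lemma vab_norm a b y : `|vab R p A a b y| = c.
Proof. by rewrite vabE normrM c_norm psi_norm // mulr1. Qed.

Lemma inner_vv_bound a b a' b' : (a, b) != (a', b') ->
  `|inner (vab R p A a b) (vab R p A a' b')| <= c.
Proof.
move=> ne; rewrite inner_vv normrM normrM c_norm.
have [ea|na] := eqVneq a a'.
  subst a'; have nb : b - b' != 0.
    by rewrite subr_eq0; apply: contra ne => /eqP ->.
  rewrite (eq_bigr (fun x => ps ((b - b') * (x + a)))); last first.
    by move=> x _; rewrite /u; congr (ps _); ring.
  rewrite (@sum_psi_inj R F p hp hc (fun x => (b - b') * (x + a))).
    by rewrite normr0 mulr0 c_ge0.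
  by move=> x y /(mulfI nb) /addIr.
set S := \sum_(x : F) _.
have hS : S * S^* = q.
  apply: (planar_sum R hp hc (g := fun x => u a b x - u a' b' x)) => e he.
  have na' : a - a' != 0 by rewrite subr_eq0.
  have hi := bij_inj (hA na' he).
  have E : forall z, A (z + e + a) + b * (z + e + a) - (A (z + e + a') + b' * (z + e + a'))
     - (A (z + a) + b * (z + a) - (A (z + a') + b' * (z + a')))
     = Delta (Delta A (a - a')) e (z + a') + (b - b') * e.
    move=> z; rewrite /Delta.
    rewrite (_ : z + a' + e + (a - a') = z + e + a); last by ring.
    rewrite (_ : z + a' + (a - a') = z + a); last by ring.
    rewrite (_ : z + a' + e = z + e + a'); last by ring.
    ring.
  by move=> x y; rewrite /Delta /u !E => /addIr /hi /addIr.
have : `|S| ^+ 2 = s ^+ 2 by rewrite normCK hS sqrtCK.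
move/eqP; rewrite (eqrXn2 (n := 2)) // => /eqP ->.
by rewrite -mulrA cs mulr1.
Qed.

End Main.


Theorem corollary1 (R : realType) (F : finFieldType) (p : nat) (A : F -> F) :
  prime p -> p \in [pchar F] -> alltop A ->
  signal_set (#|F| ^ 2 + #|F|)%N #|F| (CA R p A) /\
  is_Imax (CA R p A) (sqrtC (#|F|%:R : R[i]))^-1.
Proof.
move=> hp hc hA.
have unit : forall i, inner (CA R p A i) (CA R p A i) = 1.
  case=> [[a b]|y] /=.
    rewrite (inner_vv R A hp hc).
    under eq_bigr do rewrite subrr (psi0 R hp hc).
    by rewrite sumr_const ccq.
  by rewrite inner_ee eqxx.
have key : forall i j, i != j ->
    `|inner (CA R p A i) (CA R p A j)| <= (sqrtC (#|F|%:R : R[i]))^-1.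
  case=> [[a b]|y] [[a' b']|y'] /= ne.
  - exact: (inner_vv_bound R hp hc hA).
  - by rewrite inner_ve (vab_norm R A hp).
  - by rewrite inner_ev norm_conjC (vab_norm R A hp).
  - have ne' : y != y' by apply: contra ne => /eqP ->.
    by rewrite inner_ee (negbTE ne') normr0 c_ge0.
split.
  split => //.
  - by rewrite card_sum card_prod mulnn.
  - move=> i j e; apply/eqP; apply: contraT => ne.
    have := key i j ne; rewrite e unit normr1 invf_ge1 ?s_gt0 // => h.
    have := exprn_ile1 2 (ltW (s_gt0 R F)) h; rewrite sqrtCK lern1.
    by rewrite leqNgt cardF_gt1.
split => //; exists (inl (0, 0)), (inr 0); split => //.
by rewrite /= inner_ve (vab_norm R A hp).
Qed.
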